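(* Let $G$ be a connected edge-stable equimatchable graph with a cut vertex $v$. Then each connected component of $G-v$ is an edge-stable equimatchable graph.
   Context: All graphs are finite and simple. A graph is equimatchable if all its maximal matchings have the same cardinality; an equimatchable graph $G$ is edge-stable if $G\setminus e$ (delete edge $e$, keep vertices) is equimatchable for every $e\in E(G)$. A cut vertex of a connected graph is a vertex whose removal disconnects it. *)

(* Defs.v *)
From mathcomp Require Import all_boot.
Set Implicit Arguments. Unset Strict Implicit. Unset Printing Implicit Defensive.

(* A finite simple graph on vertex set S (a subset of a finType V) is given
   by an edge set E : {set {set V}}; each edge is a 2-element subset of S. *)
Section Graphs.
Variable V : finType.

Definition simple_graph (S : {set V}) (E : {set {set V}}) : Prop :=
  forall e, e \in E -> #|e| = 2 /\ e \subset S.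

Definition adj (E : {set {set V}}) : rel V := fun x y => [set x; y] \in E.

Definition connected_graph (S : {set V}) (E : {set {set V}}) : Prop :=
  forall x y, x \in S -> y \in S -> connect (adj E) x y.

Definition del_vertex_edges (E : {set {set V}}) (v : V) : {set {set V}} :=
  [set e in E | v \notin e].

Definition cut_vertex (S : {set V}) (E : {set {set V}}) (v : V) : Prop :=
  v \in S /\ ~ connected_graph (S :\ v) (del_vertex_edges E v).

Definition induced_edges (E : {set {set V}}) (C : {set V}) : {set {set V}} :=
  [set e in E | e \subset C].

Definition component (S : {set V}) (E : {set {set V}}) (x : V) : {set V} :=
  [set y in S | connect (adj E) x y].

Definition matching (E M : {set {set V}}) : Prop :=
  M \subset E /\ (forall e f, e \in M -> f \in M -> e != f -> [disjoint e & f]).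

Definition maximal_matching (E M : {set {set V}}) : Prop :=
  matching E M /\ (forall e, e \in E -> e \notin M -> ~ matching E (e |: M)).

Definition equimatchable (E : {set {set V}}) : Prop :=
  forall M1 M2, maximal_matching E M1 -> maximal_matching E M2 -> #|M1| = #|M2|.

Definition edge_stable (E : {set {set V}}) : Prop :=
  equimatchable E /\ (forall e, e \in E -> equimatchable (E :\ e)).

End Graphs.

(* Main.v *)
Require Import Defs.
From mathcomp Require Import all_boot.
Set Implicit Arguments. Unset Strict Implicit. Unset Printing Implicit Defensive.

Definition matchb (V : finType) (E M : {set {set V}}) : bool :=
  (M \subset E) && [forall e in M, forall f in M, (e != f) ==> [disjoint e & f]].

Lemma matchbP (V : finType) (E M : {set {set V}}) : reflect (matching E M) (matchb E M).
Proof.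
apply: (iffP andP) => [[sME /forall_inP H]|[sME H]]; split => //.
- move=> e f eM fM nef. by move: (H e eM) => /forall_inP /(_ f fM) /implyP; apply.
- apply/forall_inP => e eM; apply/forall_inP => f fM; apply/implyP; exact: H.
Qed.

Lemma ex_maxmatch (V : finType) (R N0 : {set {set V}}) :
  matching R N0 -> exists N, maximal_matching R N /\ N0 \subset N.
Proof.
move=> /matchbP h. have [N /maxsetP [mN maxN] sub] := maxset_exists h.
exists N; split=> //; split; first exact/matchbP.
move=> g gR gN /matchbP mg. have eq := maxN _ mg (subsetUr _ _).
by move: gN; rewrite -eq !inE eqxx.
Qed.

Lemma key (V : finType) (E : {set {set V}}) (C : {set V}) (v d : V) :
  (forall f, f \in E -> f != set0) ->
  (forall f, f \in E -> ~~ [disjoint f & C] -> ~~ (f \subset C) -> v \in f) ->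
  [set v; d] \in E -> d \notin C -> v \notin C ->
  equimatchable E -> equimatchable (induced_edges E C).
Proof.
move=> hne hF1 hvd dC vC eqE.
set R := [set f in E | [disjoint f & C]].
have vdR : [set v; d] \in R.
  rewrite inE hvd /= disjoint_sym; apply/pred0P => y /=.
  by rewrite !inE; apply/negP => /andP [yC /orP [] /eqP ey]; subst y;
     [move: vC | move: dC]; rewrite yC.
have [N [[[sNR dN] maxN] vdN]] : exists N, maximal_matching R N /\ [set [set v; d]] \subset N.
  apply: ex_maxmatch; split; first by rewrite sub1set.
  by move=> e f; rewrite !inE => /eqP -> /eqP ->; rewrite eqxx.
rewrite sub1set in vdN.
have ext : forall M, maximal_matching (induced_edges E C) M ->
    maximal_matching E (M :|: N) /\ #|M :|: N| = #|M| + #|N|.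
  move=> M [[sMH dM] maxM].
  have MC : forall f, f \in M -> f \subset C.
    by move=> f /(subsetP sMH); rewrite inE => /andP [].
  have NC : forall f, f \in N -> [disjoint f & C].
    by move=> f /(subsetP sNR); rewrite inE => /andP [].
  have ME : forall f, f \in M -> f \in E.
    by move=> f /(subsetP sMH); rewrite inE => /andP [].
  have NE : forall f, f \in N -> f \in E.
    by move=> f /(subsetP sNR); rewrite inE => /andP [].
  have MNd : forall f g, f \in M -> g \in N -> [disjoint f & g].
    move=> f g fM gN; apply: disjointWl (MC f fM) _.
    by rewrite disjoint_sym; exact: NC.
  have mMN : matching E (M :|: N).
    split.
      apply/subsetP => f; rewrite inE => /orP [] ?; [exact: ME | exact: NE].
    move=> e f; rewrite !inE => /orP [] he /orP [] hf nef.
    - exact: dM.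
    - exact: MNd.
    - by rewrite disjoint_sym; exact: MNd.
    - exact: dN.
  split; last first.
    rewrite cardsU; suff -> : M :&: N = set0 by rewrite cards0 subn0.
    apply/setP => f; rewrite !inE; apply/negP => /andP [fM fN].
    have := MNd f f fM fN. rewrite -setI_eq0 setIid => /eqP f0.
    by move: (hne f (ME f fM)); rewrite f0 eqxx.
  split=> // g gE gMN [sgE dg].
  have dg' : forall f, f \in M :|: N -> g != f -> [disjoint g & f].
    move=> f fMN ngf; apply: dg ngf; first by rewrite setU11.
    by rewrite setU1r.
  have [gdC|ngdC] := boolP [disjoint g & C].
    have gR : g \in R by rewrite inE gE.
    have gN : g \notin N by apply: contra gMN; rewrite inE => ->; rewrite orbT.
    apply: (maxN g gR gN); split.
      by apply/subsetP => f; rewrite in_setU1 => /orP [/eqP -> // | /(subsetP sNR)].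
    move=> e f; rewrite !in_setU1 => /orP [/eqP -> | eN] /orP [/eqP -> | fN] nef.
    - by rewrite eqxx in nef.
    - by apply: dg' => //; rewrite in_setU fN orbT.
    - by rewrite disjoint_sym; apply: dg' => //; rewrite ?in_setU ?eN ?orbT // eq_sym.
    - exact: dN.
  have [gsC|ngsC] := boolP (g \subset C).
    have gH : g \in induced_edges E C by rewrite inE gE.
    have gM : g \notin M by apply: contra gMN; rewrite inE => ->.
    apply: (maxM g gH gM); split.
      by apply/subsetP => f; rewrite in_setU1 => /orP [/eqP -> // | /(subsetP sMH)].
    move=> e f; rewrite !in_setU1 => /orP [/eqP -> | eN] /orP [/eqP -> | fN] nef.
    - by rewrite eqxx in nef.
    - by apply: dg' => //; rewrite in_setU fN.
    - by rewrite disjoint_sym; apply: dg' => //; rewrite ?in_setU ?eN // eq_sym.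
    - exact: dM.
  have vg := hF1 g gE ngdC ngsC.
  have ng : g != [set v; d].
    by apply: contra gMN => /eqP ->; rewrite inE vdN orbT.
  have := dg' _ (_ : [set v; d] \in M :|: N) ng.
  rewrite inE vdN orbT => /(_ isT) /pred0P /(_ v) /=.
  by rewrite vg !inE eqxx.
move=> M1 M2 h1 h2.
have [m1 c1] := ext M1 h1; have [m2 c2] := ext M2 h2.
have := eqE _ _ m1 m2; rewrite c1 c2 => /eqP; rewrite eqn_add2r => /eqP.
done.
Qed.

Lemma path_inv (T : finType) (e : rel T) (I : pred T) :
  (forall a b, I a -> e a b -> I b) ->
  forall p a, I a -> path e a p -> I (last a p).
Proof.
move=> cl; elim=> [|b p IH] a Ia //= /andP [eab pb].
exact: IH (cl _ _ Ia eab) pb.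
Qed.

Theorem lemma4p2 (V : finType) (S : {set V}) (E : {set {set V}}) (v : V) :
  simple_graph S E ->
  connected_graph S E ->
  edge_stable E ->
  cut_vertex S E v ->
  forall x, x \in S :\ v ->
    let C := component (S :\ v) (del_vertex_edges E v) x in
    edge_stable (induced_edges E C).
Proof.
move=> hS hconn [eqE hst] [vS hncut] x xA /=.
set E0 := del_vertex_edges E v. set A := S :\ v. set C := component A E0 x.
have adjsym : forall (F : {set {set V}}) a b, adj F a b = adj F b a.
  by move=> F a b; rewrite /adj setUC.
have csym0 : connect_sym (adj E0) by apply: sym_connect_sym => a b; exact: adjsym.
have CA : forall u, u \in C -> u \in A by move=> u; rewrite inE => /andP [].
have vC : v \notin C by apply/negP => /CA; rewrite !inE eqxx.
have xC : x \in C by rewrite inE xA connect0.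
have inC : forall u, u \in A -> connect (adj E0) x u -> u \in C.
  by move=> u uA cu; rewrite inE uA.
have cxC : forall u, u \in C -> connect (adj E0) x u by move=> u; rewrite inE => /andP [].
have hne : forall f, f \in E -> f != set0.
  move=> f /hS [c2 _]; apply/negP => /eqP f0; move: c2; rewrite f0 cards0.
  by [].
have edgeS : forall a b, [set a; b] \in E -> b \in S.
  move=> a b /hS [_ /subsetP]; apply; by rewrite !inE eqxx orbT.
have edgeSl : forall a b, [set a; b] \in E -> a \in S.
  move=> a b /hS [_ /subsetP]; apply; by rewrite !inE eqxx.
have step : forall a b, a \in C -> b != v -> [set a; b] \in E -> b \in C.
  move=> a b aC bv abE.
  have av : a != v by apply: contraNneq vC => <-.
  apply: inC; first by rewrite !inE bv (edgeS _ _ abE).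
  apply: connect_trans (cxC _ aC) (connect1 _).
  rewrite /adj /E0 /del_vertex_edges inE abE /= !inE negb_or.
  by rewrite eq_sym av eq_sym bv.
have [/existsP [d /andP [vdE dC]] | nod] :=
  boolP [exists d, ([set v; d] \in E) && (d \notin C)]; last first.
  exfalso; apply: hncut.
  have allC : forall w, w \in A -> w \in C.
    move=> w wA.
    have xS : x \in S by move: xA; rewrite inE => /andP [].
    have wS : w \in S by move: wA; rewrite inE => /andP [].
    have := hconn x w xS wS.
    move=> /connectP [p pp wl]; rewrite wl.
    have : [pred u | (u \in C) || (u == v)] (last x p).
      apply: (path_inv (e := adj E) (I := [pred u | (u \in C) || (u == v)])) pp; last by rewrite /= xC.
      move=> a b; rewrite /= => /orP [aC | /eqP ->] ab.
        by have [/eqP ->|bv] := boolP (b == v); [rewrite orbT | rewrite (step a b aC bv ab)].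
      apply/orP; left; apply/negPn/negP => bC; move/negP: nod; apply.
      by apply/existsP; exists b; rewrite /adj in ab; rewrite ab bC.
    move=> /= /orP [//|/eqP wv'].
    by move: wA; rewrite wl wv' !inE eqxx.
  move=> y z yA zA.
  apply: connect_trans (cxC _ (allC _ zA)).
  by rewrite csym0; exact: cxC (allC _ yA).
have hF1 : forall f, f \in E -> ~~ [disjoint f & C] -> ~~ (f \subset C) -> v \in f.
  move=> f fE; rewrite -setI_eq0 => /set0Pn [a]; rewrite inE => /andP [af aC].
  move=> /subsetPn [b bf bC].
  apply/negPn/negP => vf.
  have bv : b != v by apply: contraNneq vf => <-.
  have ab : a != b by apply: contraNneq bC => <-.
  have fab : [set a; b] = f.
    apply/eqP; rewrite eqEcard; apply/andP; split.
      by apply/subsetP => u; rewrite !inE => /orP [] /eqP ->.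
    by have [c2 _] := hS f fE; rewrite c2 cards2 ab.
  by move/negP: bC; apply; apply: (step a) => //; rewrite fab.
have vdC : v \notin C := vC.
split; first exact: (key hne hF1 vdE dC vC eqE).
move=> e eH.
have eE : e \in E by move: eH; rewrite inE => /andP [].
have eC : e \subset C by move: eH; rewrite inE => /andP [].
have eqI : induced_edges E C :\ e = induced_edges (E :\ e) C.
  by apply/setP => f; rewrite !inE andbA.
rewrite eqI.
apply: (key (v := v) (d := d)) => //.
- by move=> f; rewrite inE => /andP [_ /hne].
- by move=> f; rewrite inE => /andP [_ /hF1].
- rewrite !inE vdE andbT; apply: contraNneq dC => vde.
  by apply: (subsetP eC); rewrite -vde !inE eqxx orbT.
- exact: hst.
Qed.
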